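(* Let $\lambda>1$, $b\ge 0$, and let $(s_n)_{n\ge0}\subset[0,1)$, $(s'_n)_{n\ge0}\subset(0,1]$, $(r_n)_{n\ge0}\subset\mathbb{R}$. Consider the planar system $$x_{n+1}=s_nx_n+s'_ny_n,\qquad y_{n+1}=x_n^{\lambda}e^{r_n-bx_{n+1}-x_n},\qquad n\ge0,$$ with $(x_0,y_0)\in[0,\infty)^2$. Put $a_n=r_{n-1}+\ln s'_n$ for $n\ge1$, and assume $s\doteq\sup_n s_n<1$, $A\doteq\sup_{n\ge1}a_n<\infty$, $\inf_n s'_n>0$. If $A<\ln(1-s)+(\lambda-1)[1-\ln(\lambda-1)]$, then every orbit $\{(x_n,y_n)\}$ with $(x_0,y_0)\in[0,\infty)^2$ converges to $(0,0)$. *)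

(* Defs.v *)
From Stdlib Require Import Reals.
Open Scope R_scope.

(* x^lam for x >= 0 and lam > 0, with the convention 0^lam = 0. *)
Definition rpow0 (x lam : R) : R := if Req_EM_T x 0 then 0 else Rpower x lam.

Fixpoint orbit (lam b : R) (s s' r : nat -> R) (x0 y0 : R) (n : nat) : R * R :=
  match n with
  | O => (x0, y0)
  | S k => let (x, y) := orbit lam b s s' r x0 y0 k in
           let x1 := s k * x + s' k * y in
           (x1, rpow0 x lam * exp (r k - b * x1 - x))
  end.

(* Main.v *)
Require Import Defs.
From Stdlib Require Import Reals Lra Lia.
Open Scope R_scope.

Lemma exp_mono a b : a <= b -> exp a <= exp b.
Proof. intros [H|H]; [left; apply exp_increasing; auto | subst; lra]. Qed.

Lemma orbit_S lam b s s' r x0 y0 k :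
  fst (orbit lam b s s' r x0 y0 (S k)) =
    s k * fst (orbit lam b s s' r x0 y0 k) + s' k * snd (orbit lam b s s' r x0 y0 k) /\
  snd (orbit lam b s s' r x0 y0 (S k)) =
    rpow0 (fst (orbit lam b s s' r x0 y0 k)) lam *
    exp (r k - b * fst (orbit lam b s s' r x0 y0 (S k)) - fst (orbit lam b s s' r x0 y0 k)).
Proof. simpl. destruct (orbit lam b s s' r x0 y0 k). simpl. split; reflexivity. Qed.

Lemma key_ineq lam x : 1 < lam -> 0 < x ->
  lam * ln x - x <= ln x + (lam - 1) * (ln (lam - 1) - 1).
Proof.
  intros Hl Hx.
  set (t := x / (lam - 1)).
  assert (Ht : 0 < t) by (unfold t; apply Rdiv_lt_0_compat; lra).
  assert (Hx' : x = t * (lam - 1)) by (unfold t; field; lra).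
  assert (Hln : ln x = ln t + ln (lam - 1)) by (rewrite Hx'; apply ln_mult; lra).
  pose proof (exp_ineq1_le (ln t)) as E. rewrite exp_ln in E by lra.
  assert (0 <= (lam - 1) * (t - 1 - ln t)) by (apply Rmult_le_pos; lra).
  rewrite Hln. rewrite Hx'. nra.
Qed.

Theorem mainTheorem2 (lam b : R) (s s' r : nat -> R) (sup_s A : R) :
  1 < lam -> 0 <= b ->
  (forall n, 0 <= s n < 1) ->
  (forall n, 0 < s' n <= 1) ->
  is_lub (fun v => exists n, v = s n) sup_s -> sup_s < 1 ->
  is_lub (fun v => exists n, (1 <= n)%nat /\ v = r (n - 1)%nat + ln (s' n)) A ->
  (exists c, 0 < c /\ forall n, c <= s' n) ->
  A < ln (1 - sup_s) + (lam - 1) * (1 - ln (lam - 1)) ->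
  forall x0 y0, 0 <= x0 -> 0 <= y0 ->
    Un_cv (fun n => fst (orbit lam b s s' r x0 y0 n)) 0 /\
    Un_cv (fun n => snd (orbit lam b s s' r x0 y0 n)) 0.
Proof.
  intros Hl Hb Hs Hs' [Hsub _] Hsup [HA _] [c [Hc Hcs]] Hcond x0 y0 Hx0 Hy0.
  set (X := fun n => fst (orbit lam b s s' r x0 y0 n)).
  set (Y := fun n => snd (orbit lam b s s' r x0 y0 n)).
  assert (HX : forall k, X (S k) = s k * X k + s' k * Y k)
    by (intro k; apply (orbit_S lam b s s' r x0 y0 k)).
  assert (HY : forall k, Y (S k) = rpow0 (X k) lam * exp (r k - b * X (S k) - X k))
    by (intro k; apply (orbit_S lam b s s' r x0 y0 k)).
  assert (Hnn : forall n, 0 <= X n /\ 0 <= Y n).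
  { induction n as [|n [IH1 IH2]].
    - unfold X, Y; simpl; lra.
    - rewrite HX, HY. split.
      + pose proof (Hs n); pose proof (Hs' n).
        assert (0 <= s n * X n) by (apply Rmult_le_pos; lra).
        assert (0 <= s' n * Y n) by (apply Rmult_le_pos; lra). lra.
      + apply Rmult_le_pos; [| left; apply exp_pos].
        unfold rpow0; destruct (Req_EM_T (X n) 0); [lra | left; unfold Rpower; apply exp_pos]. }
  assert (Hs0 : 0 <= sup_s) by (pose proof (Hs O); apply Rle_trans with (s O); [lra | apply Hsub; exists O; auto]).
  set (K := exp (A + (lam - 1) * (ln (lam - 1) - 1))).
  assert (HK : K < 1 - sup_s).
  { unfold K. rewrite <- (exp_ln (1 - sup_s)) by lra. apply exp_increasing. lra. }
  assert (HK0 : 0 < K) by apply exp_pos.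
  set (th := sup_s + K).
  assert (Hth : 0 <= th < 1) by (unfold th; lra).
  assert (Hkey : forall n, s' (S n) * Y (S n) <= K * X n).
  { intro n. rewrite HY. unfold rpow0. destruct (Req_EM_T (X n) 0) as [E|E].
    - rewrite E. assert (0 <= s' (S n)) by (pose proof (Hs' (S n)); lra).
      assert (0 <= K) by lra. nra.
    - assert (Hxp : 0 < X n) by (destruct (Hnn n); lra).
      unfold Rpower. rewrite <- (exp_ln (s' (S n))) at 1 by (apply Hs').
      replace (K * X n) with (exp (A + (lam - 1) * (ln (lam - 1) - 1) + ln (X n)))
        by (rewrite exp_plus, exp_ln by lra; reflexivity).
      rewrite <- !exp_plus.
      apply exp_mono.
      assert (HA1 : r n + ln (s' (S n)) <= A).
      { apply HA. exists (S n). split; [lia|]. replace (S n - 1)%nat with n by lia. reflexivity. }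
      pose proof (key_ineq lam (X n) Hl Hxp).
      assert (0 <= b * X (S n)) by (apply Rmult_le_pos; [lra | apply Hnn]).
      lra. }
  assert (Hrec : forall n, X (S (S n)) <= sup_s * X (S n) + K * X n).
  { intro n. rewrite (HX (S n)). pose proof (Hkey n).
    assert (s (S n) <= sup_s) by (apply Hsub; exists (S n); auto).
    assert (s (S n) * X (S n) <= sup_s * X (S n)) by (apply Rmult_le_compat_r; [apply Hnn | lra]).
    lra. }
  set (M0 := Rmax (X O) (X 1%nat)).
  assert (HM0 : 0 <= M0) by (unfold M0; pose proof (Hnn O); pose proof (Rmax_l (X O) (X 1%nat)); lra).
  assert (Hpair : forall k, X (2 * k)%nat <= th ^ k * M0 /\ X (S (2 * k)) <= th ^ k * M0).
  { induction k as [|k [IH1 IH2]].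
    - simpl. rewrite Rmult_1_l. unfold M0. split; [apply Rmax_l | apply Rmax_r].
    - assert (Hp : 0 <= th ^ k * M0) by (apply Rmult_le_pos; [apply pow_le; lra | lra]).
      replace (2 * S k)%nat with (S (S (2 * k))) by lia.
      assert (A1 : X (S (S (2 * k))) <= th ^ S k * M0).
      { pose proof (Hrec (2 * k)%nat).
        assert (sup_s * X (S (2*k)) <= sup_s * (th ^ k * M0)) by (apply Rmult_le_compat_l; lra).
        assert (K * X (2*k)%nat <= K * (th ^ k * M0)) by (apply Rmult_le_compat_l; lra).
        assert (Eq : th ^ S k * M0 = sup_s * (th ^ k * M0) + K * (th ^ k * M0)) by (simpl; unfold th; ring).
        lra. }
      split; [exact A1|].
      pose proof (Hrec (S (2 * k))).
      assert (th ^ S k * M0 <= th ^ k * M0).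
      { change (th ^ S k) with (th * th ^ k). rewrite Rmult_assoc.
        assert (th * (th ^ k * M0) <= 1 * (th ^ k * M0)) by (apply Rmult_le_compat_r; lra). lra. }
      assert (sup_s * X (S (S (2*k))) <= sup_s * (th ^ k * M0)) by (apply Rmult_le_compat_l; lra).
      assert (K * X (S (2*k)) <= K * (th ^ k * M0)) by (apply Rmult_le_compat_l; lra).
      assert (Eq : th ^ S k * M0 = sup_s * (th ^ k * M0) + K * (th ^ k * M0)) by (simpl; unfold th; ring).
      lra. }
  assert (Hbd : forall n, X n <= th ^ (Nat.div2 n) * M0).
  { intro n. rewrite (Nat.div2_odd n) at 1. destruct (Nat.odd n); simpl Nat.b2n.
    - replace (2 * Nat.div2 n + 1)%nat with (S (2 * Nat.div2 n)) by lia. apply Hpair.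
    - rewrite Nat.add_0_r. apply Hpair. }
  assert (HcvX : Un_cv X 0).
  { intros eps Heps.
    destruct (pow_lt_1_zero th ltac:(rewrite Rabs_right; lra) (eps / (M0 + 1)))
      as [N HN]; [apply Rdiv_lt_0_compat; lra|].
    exists (2 * N)%nat. intros n Hn. unfold Rdist. rewrite Rminus_0_r.
    rewrite Rabs_right by (apply Rle_ge, Hnn).
    assert (Hd : (Nat.div2 n >= N)%nat) by (pose proof (Nat.div2_odd n); destruct (Nat.odd n); simpl in *; lia).
    pose proof (HN _ Hd) as H1. rewrite Rabs_right in H1 by (apply Rle_ge, pow_le; lra).
    pose proof (Hbd n).
    assert (Hq : th ^ Nat.div2 n * (M0 + 1) < eps).
    { apply Rmult_lt_compat_r with (r := M0 + 1) in H1; [|lra].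
      unfold Rdiv in H1. rewrite Rmult_assoc, Rinv_l, Rmult_1_r in H1 by lra. exact H1. }
    assert (0 <= th ^ Nat.div2 n) by (apply pow_le; lra). nra. }
  split; [exact HcvX|].
  intros eps Heps.
  destruct (HcvX (c * eps) ltac:(nra)) as [N HN].
  exists (S N). intros n Hn. destruct n as [|m]; [lia|].
  unfold Rdist. rewrite Rminus_0_r. rewrite Rabs_right by (apply Rle_ge, Hnn).
  pose proof (HN (S (S m)) ltac:(lia)) as H1. unfold Rdist in H1. rewrite Rminus_0_r in H1.
  rewrite Rabs_right in H1 by (apply Rle_ge, Hnn).
  rewrite (HX (S m)) in H1.
  assert (0 <= s (S m) * X (S m)) by (apply Rmult_le_pos; [apply Hs | apply Hnn]).
  pose proof (Hcs (S m)). pose proof (Hnn (S m)) as [_ Hy].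
  assert (c * Y (S m) <= s' (S m) * Y (S m)) by (apply Rmult_le_compat_r; lra).
  nra.
Qed.
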